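(* Let $\mathbf{H}$ be any one of the four history systems $\mathbf{G3N}^{Hist}$, $\mathbf{G3NeF}^{Hist}$, $\mathbf{G3CoPC}^{Hist}$, $\mathbf{G3MPC}^{Hist}$. Contraction is admissible in $\mathbf{H}$: for every finite set of formulas $\mathcal H$, finite multiset $\Gamma$ and formulas $\alpha,\varphi$, if $\mathcal H\mid\Gamma,\alpha,\alpha\Rightarrow\varphi$ is derivable in $\mathbf{H}$, then $\mathcal H\mid\Gamma,\alpha\Rightarrow\varphi$ is derivable in $\mathbf{H}$.
   Context: Formulas are generated from a countable set of propositional variables $p,q,\dots$ and the constant $\top$ by the grammar $\varphi::= p\mid\top\mid\varphi\wedge\varphi\mid\varphi\vee\varphi\mid\varphi\to\varphi\mid\neg\varphi$ (there is no constant $\bot$). A history sequent is an expression $\mathcal H\mid\Gamma\Rightarrow\varphi$ where $\mathcal H$ (the history) is a finite set of formulas, $\Gamma$ is a finite multiset of formulas and $\varphi$ is a formula (the goal). $(\psi,\mathcal H)$ denotes $\mathcal H\cup\{\psi\}$, $\emptyset$ is the empty history, $\Gamma,\alpha$ denotes $\Gamma$ with one more occurrence of $\alpha$, and ''$\alpha\in\Gamma$'' means $\alpha$ occurs in $\Gamma$. History rules ($p$ a propositional variable; side conditions after ''if''): (ax) $\mathcal H\mid\Gamma,p\Rightarrow p$; ($\top$) $\mathcal H\mid\Gamma\Rightarrow\top$; ($\to$r$_1$) from $\emptyset\mid\Gamma,\alpha\Rightarrow\beta$ infer $\mathcal H\mid\Gamma\Rightarrow\alpha\to\beta$, if $\alpha\notin\Gamma$;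 ($\to$r$_2$) from $\mathcal H\mid\Gamma\Rightarrow\beta$ infer $\mathcal H\mid\Gamma\Rightarrow\alpha\to\beta$, if $\alpha\in\Gamma$; ($\to$l) from $(\varphi,\mathcal H)\mid\Gamma,\alpha\to\beta\Rightarrow\alpha$ and $\emptyset\mid\Gamma,\alpha\to\beta,\beta\Rightarrow\varphi$ infer $\mathcal H\mid\Gamma,\alpha\to\beta\Rightarrow\varphi$, if $\varphi\notin\mathcal H$ and $\beta\notin\Gamma$; ($\wedge$r) from $\mathcal H\mid\Gamma\Rightarrow\alpha$ and $\mathcal H\mid\Gamma\Rightarrow\beta$ infer $\mathcal H\mid\Gamma\Rightarrow\alpha\wedge\beta$; ($\wedge$l$_1$) from $\emptyset\mid\Gamma,\alpha\wedge\beta,\alpha\Rightarrow\varphi$ infer $\mathcal H\mid\Gamma,\alpha\wedge\beta\Rightarrow\varphi$, if $\alpha\notin\Gamma$; ($\wedge$l$_2$) from $\emptyset\mid\Gamma,\alpha\wedge\beta,\beta\Rightarrow\varphi$ infer $\mathcal H\mid\Gamma,\alpha\wedge\beta\Rightarrow\varphi$, if $\beta\notin\Gamma$; ($\vee$r$_1$), ($\vee$r$_2$) from $\mathcal H\mid\Gamma\Rightarrow\alpha$ (resp. $\mathcal H\mid\Gamma\Rightarrow\beta$) infer $\mathcal H\mid\Gamma\Rightarrow\alpha\vee\beta$; ($\vee$l) from $\emptyset\mid\Gamma,\alpha\vee\beta,\alpha\Rightarrow\varphi$ and $\emptyset\mid\Gamma,\alpha\vee\beta,\beta\Rightarrow\varphi$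 infer $\mathcal H\mid\Gamma,\alpha\vee\beta\Rightarrow\varphi$, if $\alpha,\beta\notin\Gamma$; (n$_1$) from $\emptyset\mid\Gamma,\neg\alpha,\beta\Rightarrow\alpha$ and $\emptyset\mid\Gamma,\neg\alpha,\alpha\Rightarrow\beta$ infer $\mathcal H\mid\Gamma,\neg\alpha\Rightarrow\neg\beta$, if $\beta\notin\Gamma\cup\{\neg\alpha\}$ and $\alpha\notin\Gamma$; (n$_2$) from $\emptyset\mid\Gamma,\neg\alpha,\beta\Rightarrow\alpha$ and $\mathcal H\mid\Gamma,\neg\alpha\Rightarrow\beta$ infer $\mathcal H\mid\Gamma,\neg\alpha\Rightarrow\neg\beta$, if $\beta\notin\Gamma\cup\{\neg\alpha\}$ and $\alpha\in\Gamma$; (n$_3$) from $(\neg\beta,\mathcal H)\mid\Gamma,\neg\alpha\Rightarrow\alpha$ and $\emptyset\mid\Gamma,\neg\alpha,\alpha\Rightarrow\beta$ infer $\mathcal H\mid\Gamma,\neg\alpha\Rightarrow\neg\beta$, if $\neg\beta\notin\mathcal H$, $\beta\in\Gamma\cup\{\neg\alpha\}$ and $\alpha\notin\Gamma$; (n$_4$) from $(\neg\beta,\mathcal H)\mid\Gamma,\neg\alpha\Rightarrow\alpha$ and $\mathcal H\mid\Gamma,\neg\alpha\Rightarrow\beta$ infer $\mathcal H\mid\Gamma,\neg\alpha\Rightarrow\neg\beta$, if $\neg\beta\notin\mathcal H$, $\beta\in\Gamma\cup\{\neg\alpha\}$ and $\alpha\in\Gamma$; (nef) from $(\neg\beta,\mathcal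 H)\mid\Gamma,\neg\alpha\Rightarrow\alpha$ infer $\mathcal H\mid\Gamma,\neg\alpha\Rightarrow\neg\beta$, if $\neg\beta\notin\mathcal H$; (copc$_1$) from $\emptyset\mid\Gamma,\neg\alpha,\beta\Rightarrow\alpha$ infer $\mathcal H\mid\Gamma,\neg\alpha\Rightarrow\neg\beta$, if $\beta\notin\Gamma\cup\{\neg\alpha\}$; (copc$_2$) from $(\neg\beta,\mathcal H)\mid\Gamma,\neg\alpha\Rightarrow\alpha$ infer $\mathcal H\mid\Gamma,\neg\alpha\Rightarrow\neg\beta$, if $\neg\beta\notin\mathcal H$ and $\beta\in\Gamma\cup\{\neg\alpha\}$; (an) from $\emptyset\mid\Gamma,\alpha\Rightarrow\neg\alpha$ infer $\mathcal H\mid\Gamma\Rightarrow\neg\alpha$, if $\alpha\notin\Gamma$. In addition, the left rules ($\to$l), ($\wedge$l$_1$), ($\wedge$l$_2$), ($\vee$l) may only be applied when the goal $\varphi$ of the conclusion is a propositional variable, a negation or a disjunction. The positive history rules are (ax) through ($\vee$l). The four history systems are: $\mathbf{G3N}^{Hist}$ = positive history rules + (n$_1$)–(n$_4$); $\mathbf{G3NeF}^{Hist}$ = positive history rules + (n$_1$)–(n$_4$) + (nef); $\mathbf{G3CoPC}^{Hist}$ = positive history rules + (copc$_1$), (copc$_2$); $\mathbf{G3MPC}^{Hist}$ = positive history rules + (copc$_1$), (copc$_2$), (an). A derivation is a finite tree of rule instances whose leaves are instances of (ax) or ($\top$). *)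

(* Defs.v *)
From Stdlib Require Import List Permutation.
Import ListNotations.

Inductive form : Type :=
| Var : nat -> form
| Top : form
| And : form -> form -> form
| Or  : form -> form -> form
| Imp : form -> form -> form
| Neg : form -> form.

Inductive system : Type := G3N | G3NeF | G3CoPC | G3MPC.

(* which negation rules each system contains *)
Definition has_n (S : system) : Prop := S = G3N \/ S = G3NeF.
Definition has_nef (S : system) : Prop := S = G3NeF.
Definition has_copc (S : system) : Prop := S = G3CoPC \/ S = G3MPC.
Definition has_an (S : system) : Prop := S = G3MPC.

Definition lgoal (f : form) : Prop :=
  match f with Var _ | Neg _ | Or _ _ => True | _ => False end.

(* The history H is a finite set represented by a list (only membership
   matters); the antecedent D is a finite multiset represented by a list
   (a rule's conclusion  Gamma, alpha  is any list that is a permutation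
   of alpha :: Gamma). *)
Inductive deriv (S : system) : list form -> list form -> form -> Prop :=
| d_ax H G p : In (Var p) G -> deriv S H G (Var p)
| d_top H G : deriv S H G Top
| d_impr1 H G a b :
    ~ In a G -> deriv S [] (a :: G) b -> deriv S H G (Imp a b)
| d_impr2 H G a b :
    In a G -> deriv S H G b -> deriv S H G (Imp a b)
| d_impl H G D a b f :
    Permutation D (Imp a b :: G) -> lgoal f -> ~ In f H -> ~ In b G ->
    deriv S (f :: H) D a -> deriv S [] (b :: D) f -> deriv S H D f
| d_andr H G a b :
    deriv S H G a -> deriv S H G b -> deriv S H G (And a b)
| d_andl1 H G D a b f :
    Permutation D (And a b :: G) -> lgoal f -> ~ In a G ->
    deriv S [] (a :: D) f -> deriv S H D f
| d_andl2 H G D a b f :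
    Permutation D (And a b :: G) -> lgoal f -> ~ In b G ->
    deriv S [] (b :: D) f -> deriv S H D f
| d_orr1 H G a b : deriv S H G a -> deriv S H G (Or a b)
| d_orr2 H G a b : deriv S H G b -> deriv S H G (Or a b)
| d_orl H G D a b f :
    Permutation D (Or a b :: G) -> lgoal f -> ~ In a G -> ~ In b G ->
    deriv S [] (a :: D) f -> deriv S [] (b :: D) f -> deriv S H D f
| d_n1 H G D a b :
    has_n S -> Permutation D (Neg a :: G) ->
    ~ In b G -> b <> Neg a -> ~ In a G ->
    deriv S [] (b :: D) a -> deriv S [] (a :: D) b -> deriv S H D (Neg b)
| d_n2 H G D a b :
    has_n S -> Permutation D (Neg a :: G) ->
    ~ In b G -> b <> Neg a -> In a G ->
    deriv S [] (b :: D) a -> deriv S H D b -> deriv S H D (Neg b)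
| d_n3 H G D a b :
    has_n S -> Permutation D (Neg a :: G) ->
    ~ In (Neg b) H -> (In b G \/ b = Neg a) -> ~ In a G ->
    deriv S (Neg b :: H) D a -> deriv S [] (a :: D) b -> deriv S H D (Neg b)
| d_n4 H G D a b :
    has_n S -> Permutation D (Neg a :: G) ->
    ~ In (Neg b) H -> (In b G \/ b = Neg a) -> In a G ->
    deriv S (Neg b :: H) D a -> deriv S H D b -> deriv S H D (Neg b)
| d_nef H G D a b :
    has_nef S -> Permutation D (Neg a :: G) ->
    ~ In (Neg b) H ->
    deriv S (Neg b :: H) D a -> deriv S H D (Neg b)
| d_copc1 H G D a b :
    has_copc S -> Permutation D (Neg a :: G) ->
    ~ In b G -> b <> Neg a ->
    deriv S [] (b :: D) a -> deriv S H D (Neg b)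
| d_copc2 H G D a b :
    has_copc S -> Permutation D (Neg a :: G) ->
    ~ In (Neg b) H -> (In b G \/ b = Neg a) ->
    deriv S (Neg b :: H) D a -> deriv S H D (Neg b)
| d_an H G a :
    has_an S -> ~ In a G ->
    deriv S [] (a :: G) (Neg a) -> deriv S H G (Neg a).

(* Main.v *)
Require Import Defs.
From Stdlib Require Import List Permutation Lia.
Import ListNotations.

Fixpoint fsize (x : form) : nat :=
  match x with
  | Var _ | Top => 1
  | And a b | Or a b | Imp a b => S (fsize a + fsize b)
  | Neg a => S (fsize a)
  end.

Lemma ne_imp a b : b <> Imp a b.
Proof. intro E; apply (f_equal fsize) in E; simpl in E; lia. Qed.
Lemma ne_and1 a b : a <> And a b.
Proof. intro E; apply (f_equal fsize) in E; simpl in E; lia. Qed.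
Lemma ne_and2 a b : b <> And a b.
Proof. intro E; apply (f_equal fsize) in E; simpl in E; lia. Qed.
Lemma ne_or1 a b : a <> Or a b.
Proof. intro E; apply (f_equal fsize) in E; simpl in E; lia. Qed.
Lemma ne_or2 a b : b <> Or a b.
Proof. intro E; apply (f_equal fsize) in E; simpl in E; lia. Qed.
Lemma ne_neg a : a <> Neg a.
Proof. intro E; apply (f_equal fsize) in E; simpl in E; lia. Qed.

Definition form_eq_dec : forall x y : form, {x = y} + {x <> y}.
Proof. decide equality; apply PeanoNat.Nat.eq_dec. Defined.

Lemma split_in (x : form) D : In x D ->
  exists G, Permutation D (x :: G) /\ (forall y, In y G -> In y D) /\
            (forall y, In y D -> y <> x -> In y G).
Proof.
  intro Hx. apply in_split in Hx as [l1 [l2 E]]. subst.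
  exists (l1 ++ l2). split; [apply Permutation_sym, Permutation_middle|].
  split; intros y Hy.
  - apply in_app_or in Hy; apply in_or_app; destruct Hy; [left|right; right]; auto.
  - intro Hne. apply in_app_or in Hy; apply in_or_app; destruct Hy as [Hy|[Hy|Hy]];
      [left; auto | congruence | right; auto].
Qed.

Lemma perm_in D x G (y : form) : Permutation D (x :: G) -> In y G -> In y D.
Proof. intros P Hy. apply (Permutation_in _ (Permutation_sym P)); right; auto. Qed.
Lemma perm_in0 D (x : form) G : Permutation D (x :: G) -> In x D.
Proof. intros P. apply (Permutation_in _ (Permutation_sym P)); left; auto. Qed.
Lemma perm_notin D x G (y : form) : Permutation D (x :: G) -> y <> x -> ~ In y G -> ~ In y D.
Proof.
  intros P ne ni Hy. apply (Permutation_in _ P) in Hy. destruct Hy; [congruence|auto].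
Qed.

Lemma incl_cons2 (x : form) D D' : incl D D' -> incl (x :: D) (x :: D').
Proof. intros i y [E|Hy]; [left; auto|right; auto]. Qed.

Lemma set_inv S H D f : deriv S H D f ->
  forall D', incl D D' -> incl D' D -> deriv S H D' f.
Proof.
  induction 1; intros D' i1 i2.
  - apply d_ax; auto.
  - apply d_top.
  - apply d_impr1; [intro; auto|]. apply IHderiv; apply incl_cons2; auto.
  - apply d_impr2; auto.
  - destruct (split_in (Imp a b) D') as [G' [P' [A1 A2]]]; [apply i1; eapply perm_in0; eauto|].
    eapply d_impl; eauto.
    + intro Hb. apply A1 in Hb. apply i2 in Hb. revert Hb.
      eapply perm_notin; eauto; apply ne_imp.
    + apply IHderiv2; apply incl_cons2; auto.
  - apply d_andr; auto.
  - destruct (split_in (And a b) D') as [G' [P' [A1 A2]]]; [apply i1; eapply perm_in0; eauto|].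
    eapply d_andl1; eauto.
    + intro Hb. apply A1 in Hb. apply i2 in Hb. revert Hb.
      eapply perm_notin; eauto; apply ne_and1.
    + apply IHderiv; apply incl_cons2; auto.
  - destruct (split_in (And a b) D') as [G' [P' [A1 A2]]]; [apply i1; eapply perm_in0; eauto|].
    eapply d_andl2; eauto.
    + intro Hb. apply A1 in Hb. apply i2 in Hb. revert Hb.
      eapply perm_notin; eauto; apply ne_and2.
    + apply IHderiv; apply incl_cons2; auto.
  - apply d_orr1; auto.
  - apply d_orr2; auto.
  - destruct (split_in (Or a b) D') as [G' [P' [A1 A2]]]; [apply i1; eapply perm_in0; eauto|].
    eapply d_orl; eauto.
    + intro Hb. apply A1 in Hb. apply i2 in Hb. revert Hb.
      eapply perm_notin; eauto; apply ne_or1.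
    + intro Hb. apply A1 in Hb. apply i2 in Hb. revert Hb.
      eapply perm_notin; eauto; apply ne_or2.
    + apply IHderiv1; apply incl_cons2; auto.
    + apply IHderiv2; apply incl_cons2; auto.
  - destruct (split_in (Neg a) D') as [G' [P' [A1 A2]]]; [apply i1; eapply perm_in0; eauto|].
    eapply d_n1; eauto.
    + intro Hb. apply A1 in Hb. apply i2 in Hb. revert Hb. eapply perm_notin; eauto.
    + intro Hb. apply A1 in Hb. apply i2 in Hb. revert Hb.
      eapply perm_notin; eauto; apply ne_neg.
    + apply IHderiv1; apply incl_cons2; auto.
    + apply IHderiv2; apply incl_cons2; auto.
  - destruct (split_in (Neg a) D') as [G' [P' [A1 A2]]]; [apply i1; eapply perm_in0; eauto|].
    eapply d_n2; eauto.
    + intro Hb. apply A1 in Hb. apply i2 in Hb. revert Hb. eapply perm_notin; eauto.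
    + apply A2; [apply i1; eapply perm_in; eauto | apply ne_neg].
    + apply IHderiv1; apply incl_cons2; auto.
  - destruct (split_in (Neg a) D') as [G' [P' [A1 A2]]]; [apply i1; eapply perm_in0; eauto|].
    eapply d_n3; eauto.
    + destruct (form_eq_dec b (Neg a)) as [e|ne]; [right; auto|left].
      apply A2; auto. apply i1. destruct H3 as [h|h]; [eapply perm_in; eauto|congruence].
    + intro Hb. apply A1 in Hb. apply i2 in Hb. revert Hb.
      eapply perm_notin; eauto; apply ne_neg.
    + apply IHderiv2; apply incl_cons2; auto.
  - destruct (split_in (Neg a) D') as [G' [P' [A1 A2]]]; [apply i1; eapply perm_in0; eauto|].
    eapply d_n4; eauto.
    + destruct (form_eq_dec b (Neg a)) as [e|ne]; [right; auto|left].
      apply A2; auto. apply i1. destruct H3 as [h|h]; [eapply perm_in; eauto|congruence].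
    + apply A2; [apply i1; eapply perm_in; eauto | apply ne_neg].
  - destruct (split_in (Neg a) D') as [G' [P' [A1 A2]]]; [apply i1; eapply perm_in0; eauto|].
    eapply d_nef; eauto.
  - destruct (split_in (Neg a) D') as [G' [P' [A1 A2]]]; [apply i1; eapply perm_in0; eauto|].
    eapply d_copc1; eauto.
    + intro Hb. apply A1 in Hb. apply i2 in Hb. revert Hb. eapply perm_notin; eauto.
    + apply IHderiv; apply incl_cons2; auto.
  - destruct (split_in (Neg a) D') as [G' [P' [A1 A2]]]; [apply i1; eapply perm_in0; eauto|].
    eapply d_copc2; eauto.
    destruct (form_eq_dec b (Neg a)) as [e|ne]; [right; auto|left].
    apply A2; auto. apply i1. destruct H3 as [h|h]; [eapply perm_in; eauto|congruence].
  - apply d_an; [auto | intro; auto |]. apply IHderiv; apply incl_cons2; auto.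
Qed.

Theorem lemma5p3 (S : system) (H G : list form) (a f : form) :
  deriv S H (a :: a :: G) f -> deriv S H (a :: G) f.
Proof.
  intro D. eapply set_inv; eauto.
  - intros y [E|[E|Hy]]; [left; auto|left; auto|right; auto].
  - intros y [E|Hy]; [left; auto|right; right; auto].
Qed.
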